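(* Let $T>0$, $\alpha>0$ and $\hat\beta<0$ be constants, and let $\hat\varphi:\mathbb{R}\to\mathbb{R}$ be a continuous $T$-periodic function with $\int_0^T\hat\varphi(s)\,ds=0$. Assume $$\frac{1}{T}\int_0^T\Big(\int_0^\tau\hat\varphi(s)\,ds\Big)^2d\tau>\Big(\frac{1}{T}\int_0^T\tau\,\hat\varphi(\tau)\,d\tau\Big)^2-\hat\beta .$$ Then there exists a number $\mu_0>0$ such that for every $\mu\in(0,\mu_0]$ the zero solution of the linear equation $$y''+\alpha\mu y'+(\hat\beta\mu^2+\mu\hat\varphi(t))\,y=0$$ is asymptotically stable.
   Context: Asymptotic stability is meant in the Lyapunov sense for the equivalent first-order system in $(y,y')$. *)

(* Defs.v *)
From Stdlib Require Import Reals.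
From Coquelicot Require Import Coquelicot.
Open Scope R_scope.

(* (y, v) is a (global) solution of the first-order system equivalent to
   y'' + a y' + q(t) y = 0, i.e. y' = v, v' = - a v - q(t) y. *)
Definition is_solution (a : R) (q : R -> R) (y v : R -> R) : Prop :=
  forall t, is_derive y t (v t) /\ is_derive v t (- a * v t - q t * y t).

Definition state_norm (y v : R -> R) (t : R) : R :=
  sqrt (y t ^ 2 + v t ^ 2).

Definition lyap_stable (a : R) (q : R -> R) : Prop :=
  forall t0 eps, 0 < eps -> exists delta, 0 < delta /\
    forall y v, is_solution a q y v -> state_norm y v t0 < delta ->
      forall t, t0 <= t -> state_norm y v t < eps.

Definition attractive (a : R) (q : R -> R) : Prop :=
  forall t0, exists delta, 0 < delta /\
    forall y v, is_solution a q y v -> state_norm y v t0 < delta ->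
      is_lim (fun t => state_norm y v t) p_infty (Finite 0).

Definition asympt_stable (a : R) (q : R -> R) : Prop :=
  lyap_stable a q /\ attractive a q.

(* Main.v *)
Require Import Defs.
From Stdlib Require Import Reals Lra.
From Coquelicot Require Import Coquelicot.
Open Scope R_scope.

Lemma prim_der (f : R -> R) (Hf : forall t, continuous f t) t :
  is_derive (fun x => RInt f 0 x) t (f t).
Proof.
  apply (is_derive_RInt f (fun x => RInt f 0 x) 0 t); [|apply Hf].
  apply filter_forall; intros b. apply (@RInt_correct R_CompleteNormedModule). apply (@ex_RInt_continuous R_CompleteNormedModule). intros; apply Hf.
Qed.

Lemma cont_of_der (f : R -> R) df t : is_derive f t df -> continuous f t.
Proof. intros H. apply (@ex_derive_continuous R_AbsRing R_NormedModule). eexists; exact H. Qed.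

Lemma prim_periodic (f : R -> R) (T : R) (Hf : forall t, continuous f t)
  (Hp : forall t, f (t + T) = f t) (H0 : RInt f 0 T = 0) t :
  RInt f 0 (t + T) = RInt f 0 t.
Proof.
  set (h := fun x : R => RInt f 0 (x + T) - RInt f 0 x).
  assert (Hd : forall x, is_derive h x zero).
  { intros x. unfold h.
    evar (d : R). replace (@zero R_NormedModule) with d.
    apply (is_derive_minus (fun x => RInt f 0 (x + T)) (fun x => RInt f 0 x)).
    apply (is_derive_comp (fun x => RInt f 0 x) (fun x => x + T)).
    apply prim_der; auto.
    apply @is_derive_plus. apply is_derive_id. apply is_derive_const.
    apply prim_der; auto.
    unfold d. rewrite Hp. unfold minus, plus, opp, scal, zero, one. simpl.
    unfold mult; simpl. ring. }
  assert (h t = h 0).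
  { destruct (Rtotal_order t 0) as [Hl|[He|Hg]].
    - apply (eq_is_derive h t 0). intros; apply Hd. exact Hl.
    - subst; reflexivity.
    - symmetry; apply (eq_is_derive h 0 t). intros; apply Hd. exact Hg. }
  unfold h in H. rewrite Rplus_0_l, H0, RInt_point in H. unfold zero in H; simpl in H. lra.
Qed.

Lemma periodic_shift (g : R -> R) T (Hp : forall t, g (t + T) = g t) (n : nat) t :
  g (t + INR n * T) = g t.
Proof.
  induction n. simpl. f_equal; ring.
  rewrite S_INR. replace (t + (INR n + 1) * T) with ((t + INR n * T) + T) by ring.
  rewrite Hp; auto.
Qed.

Lemma periodic_bounded (g : R -> R) T : 0 < T -> (forall t, continuous g t) ->
  (forall t, g (t + T) = g t) -> exists M, 0 <= M /\ forall t, Rabs (g t) <= M.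
Proof.
  intros HT Hc Hp.
  destruct (continuity_ab_maj (fun x => Rabs (g x)) 0 T) as [x0 [Hx0 _]].
  lra. intros c _. apply continuity_pt_filterlim. apply continuous_Rabs_comp. apply Hc.
  exists (Rabs (g x0)). split. apply Rabs_pos.
  assert (Hn : forall n : nat, forall x, 0 <= x <= INR (S n) * T -> Rabs (g x) <= Rabs (g x0)).
  { induction n; intros x Hx.
    - apply Hx0. simpl in Hx; lra.
    - destruct (Rle_dec x T). apply Hx0; lra.
      replace x with ((x - T) + T) by ring. rewrite Hp. apply IHn.
      rewrite S_INR in Hx. lra. }
  intros t.
  destruct (archimed (Rabs t / T)) as [H1 _].
  assert (Hz : (0 <= up (Rabs t / T))%Z).
  { apply le_IZR. assert (0 <= Rabs t / T). apply Rdiv_le_0_compat. apply Rabs_pos. lra. lra. }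
  destruct (IZN _ Hz) as [k Hk]. rewrite Hk in H1. rewrite <- INR_IZR_INZ in H1.
  rewrite <- (periodic_shift g T Hp k t). apply (Hn (k + k)%nat).
  assert (Rabs t < INR k * T).
  { apply Rmult_lt_reg_r with (/T). apply Rinv_0_lt_compat; lra.
    rewrite Rmult_assoc, Rinv_r. 2: lra. unfold Rdiv in H1. lra. }
  rewrite S_INR, plus_INR.
  pose proof (Rle_abs t). pose proof (Rle_abs (-t)). rewrite Rabs_Ropp in H2. lra.
Qed.


Lemma decr_of_der (g : R -> R) (Hd : forall t, exists d, is_derive g t d /\ d <= 0) a b :
  a <= b -> g b <= g a.
Proof.
  intros Hab. destruct (Rle_lt_or_eq_dec a b Hab) as [Hl|He]; [|subst; lra].
  destruct (MVT_gen g a b (Derive g)) as [c [Hc Heq]].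
  - intros x _. destruct (Hd x) as [d [H _]]. apply Derive_correct. exists d; exact H.
  - intros x _. destruct (Hd x) as [d [H _]]. apply continuity_pt_filterlim.
    apply (@ex_derive_continuous R_AbsRing R_NormedModule). exists d; exact H.
  - destruct (Hd c) as [d [H Hle]]. rewrite (is_derive_unique g c d H) in Heq.
    assert (d * (b - a) <= 0). { apply Rmult_le_0_r; lra. } lra.
Qed.

Lemma lyap_gen (a : R) (q : R -> R) (Vf : R -> R -> R -> R) (c k1 k2 : R) :
  0 < c -> 0 < k1 -> 0 < k2 ->
  (forall t Y W, k1 * (Y ^ 2 + W ^ 2) <= Vf t Y W <= k2 * (Y ^ 2 + W ^ 2)) ->
  (forall y v, is_solution a q y v -> forall t, exists dV,
      is_derive (fun s => Vf s (y s) (v s)) t dV /\ dV <= - c * Vf t (y t) (v t)) ->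
  asympt_stable a q.
Proof.
  intros Hc Hk1 Hk2 HV Hder.
  set (K := k2 / k1).
  assert (HK : 0 < K) by (unfold K; apply Rdiv_lt_0_compat; lra).
  assert (Hdec : forall y v, is_solution a q y v -> forall t0 t, t0 <= t ->
     y t ^ 2 + v t ^ 2 <= K * (y t0 ^ 2 + v t0 ^ 2) * exp (- c * (t - t0))).
  { intros y v Hs t0 t Ht.
    set (g := fun s => Vf s (y s) (v s) * exp (c * s)).
    assert (Hg : g t <= g t0).
    { apply decr_of_der; auto. intros s. destruct (Hder y v Hs s) as [dV [H1 H2]].
      exists (dV * exp (c * s) + Vf s (y s) (v s) * (c * exp (c * s))). split.
      - unfold g. apply (is_derive_mult (fun s => Vf s (y s) (v s)) (fun s => exp (c * s))).
        exact H1.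
        evar (d : R). replace (c * exp (c * s)) with d.
        apply (is_derive_comp exp (fun s => c * s)). apply is_derive_exp.
        apply is_derive_scal. apply is_derive_id.
        unfold d, scal, one; simpl. unfold mult; simpl. ring.
        intros; apply Rmult_comm.
      - pose proof (exp_pos (c * s)). nra. }
    unfold g in Hg.
    destruct (HV t (y t) (v t)) as [Hl1 _]. destruct (HV t0 (y t0) (v t0)) as [_ Hu0].
    assert (He : exp (c * t0) = exp (c * t) * exp (- c * (t - t0))).
    { rewrite <- exp_plus. f_equal. ring. }
    pose proof (exp_pos (c * t)). pose proof (exp_pos (- c * (t - t0))).
    assert (Vf t (y t) (v t) <= Vf t0 (y t0) (v t0) * exp (- c * (t - t0))).
    { apply Rmult_le_reg_r with (exp (c * t)); auto. rewrite He in Hg. nra. }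
    unfold K. apply Rmult_le_reg_l with k1; auto.
    replace (k1 * (k2 / k1 * (y t0 ^ 2 + v t0 ^ 2) * exp (- c * (t - t0))))
      with (k2 * (y t0 ^ 2 + v t0 ^ 2) * exp (- c * (t - t0))) by (field; lra).
    nra. }
  assert (Hsq : forall x, 0 <= x -> sqrt x * sqrt x = x) by (intros; apply sqrt_sqrt; auto).
  split.
  - intros t0 eps Heps.
    exists (eps / sqrt K). split. apply Rdiv_lt_0_compat; auto. apply sqrt_lt_R0; auto.
    intros y v Hs Hn t Ht. unfold state_norm in *.
    pose proof (Hdec y v Hs t0 t Ht).
    assert (exp (- c * (t - t0)) <= 1).
    { rewrite <- exp_0. destruct (Rle_lt_or_eq_dec _ _ Ht) as [Hl|He].
      left; apply exp_increasing; nra. subst; right; f_equal; ring. }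
    assert (HN0 : 0 <= y t0 ^ 2 + v t0 ^ 2) by nra.
    assert (y t ^ 2 + v t ^ 2 <= K * (y t0 ^ 2 + v t0 ^ 2)).
    { eapply Rle_trans. apply H. rewrite <- (Rmult_1_r (K * _)) at 2.
      apply Rmult_le_compat_l; auto. apply Rmult_le_pos; lra. }
    assert (Hs0 := sqrt_pos (y t0 ^ 2 + v t0 ^ 2)).
    assert (HsK := sqrt_lt_R0 K HK).
    assert (sqrt (y t0 ^ 2 + v t0 ^ 2) * sqrt K < eps).
    { apply Rmult_lt_reg_r with (/ sqrt K). apply Rinv_0_lt_compat; auto.
      rewrite Rmult_assoc, Rinv_r; lra. }
    apply Rle_lt_trans with (sqrt (K * (y t0 ^ 2 + v t0 ^ 2))).
    apply sqrt_le_1_alt; auto.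
    rewrite sqrt_mult; try lra.
  - intros t0. exists 1. split. lra.
    intros y v Hs _. apply is_lim_spec. intros eps. simpl.
    set (N0 := y t0 ^ 2 + v t0 ^ 2).
    assert (HN0 : 0 <= N0) by (unfold N0; nra).
    assert (Hep : 0 < eps * eps) by (pose proof (cond_pos eps); nra).
    set (r := eps * eps / (K * N0 + 1)).
    assert (Hr : 0 < r) by (unfold r; apply Rdiv_lt_0_compat; nra).
    exists (Rmax t0 (t0 - ln r / c)). intros t Ht.
    assert (Ht1 := Rle_lt_trans _ _ _ (Rmax_l _ _) Ht).
    assert (Ht2 := Rle_lt_trans _ _ _ (Rmax_r _ _) Ht).
    pose proof (Hdec y v Hs t0 t (Rlt_le _ _ Ht1)) as HD. fold N0 in HD.
    assert (Hex : exp (- c * (t - t0)) < r).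
    { rewrite <- (exp_ln r Hr). apply exp_increasing.
      assert (- ln r / c < t - t0) by lra.
      apply Rmult_lt_compat_l with (r := c) in H; auto.
      unfold Rdiv in H. rewrite <- Rmult_assoc, (Rmult_comm c), Rmult_assoc, Rinv_r in H; lra. }
    pose proof (exp_pos (- c * (t - t0))).
    assert (y t ^ 2 + v t ^ 2 < eps * eps).
    { apply Rle_lt_trans with ((K * N0 + 1) * exp (- c * (t - t0))). nra.
      replace (eps * eps) with ((K * N0 + 1) * r) by (unfold r; field; nra).
      apply Rmult_lt_compat_l; nra. }
    unfold state_norm. rewrite Rminus_0_r, Rabs_pos_eq by apply sqrt_pos.
    rewrite <- (sqrt_square eps) by (pose proof (cond_pos eps); lra).
    apply sqrt_lt_1_alt. split; nra.
Qed.


Lemma Dplus (f g : R -> R) t a b : is_derive f t a -> is_derive g t b ->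
  is_derive (fun x => f x + g x) t (a + b).
Proof. intros. apply (is_derive_plus f g); auto. Qed.
Lemma Dminus (f g : R -> R) t a b : is_derive f t a -> is_derive g t b ->
  is_derive (fun x => f x - g x) t (a - b).
Proof. intros. apply (is_derive_minus f g); auto. Qed.
Lemma Dmult (f g : R -> R) t a b : is_derive f t a -> is_derive g t b ->
  is_derive (fun x => f x * g x) t (a * g t + f t * b).
Proof. intros. apply (is_derive_mult f g); auto. intros; apply Rmult_comm. Qed.
Lemma Dpow2 (f : R -> R) t a : is_derive f t a ->
  is_derive (fun x => f x ^ 2) t (2 * f t * a).
Proof.
  intros H. apply (@is_derive_ext R_AbsRing R_NormedModule (fun x => f x * f x)). intros x; simpl. ring.
  replace (2 * f t * a) with (a * f t + f t * a) by ring. apply Dmult; auto.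
Qed.
Lemma Ddiv (f : R -> R) t a c : is_derive f t a ->
  is_derive (fun x => f x / c) t (a / c).
Proof.
  intros H. apply (@is_derive_ext R_AbsRing R_NormedModule (fun x => / c * f x)). intros x; simpl; unfold Rdiv; ring.
  replace (a / c) with (/ c * a) by (unfold Rdiv; ring). apply is_derive_scal; auto.
Qed.
Lemma Dconst t c : is_derive (fun _ : R => c) t 0.
Proof. apply (is_derive_const c). Qed.

Lemma qf_bound e1 e2 e3 B Y Z : Rabs e1 <= B -> Rabs e2 <= B -> Rabs e3 <= B ->
  Rabs (e1 * Y ^ 2 + e2 * Y * Z + e3 * Z ^ 2) <= 2 * B * (Y ^ 2 + Z ^ 2).
Proof.
  intros H1 H2 H3.
  assert (HB : 0 <= B) by (pose proof (Rabs_pos e1); lra).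
  eapply Rle_trans. apply Rabs_triang. eapply Rle_trans. apply Rplus_le_compat_r. apply Rabs_triang.
  rewrite !Rabs_mult. rewrite <- !RPow_abs.
  assert (Rabs Y ^ 2 = Y ^ 2) by (rewrite RPow_abs; apply Rabs_pos_eq; nra).
  assert (Rabs Z ^ 2 = Z ^ 2) by (rewrite RPow_abs; apply Rabs_pos_eq; nra).
  rewrite H, H0.
  assert (2 * (Rabs Y * Rabs Z) <= Y ^ 2 + Z ^ 2).
  { rewrite <- H, <- H0. pose proof (pow2_ge_0 (Rabs Y - Rabs Z)). nra. }
  pose proof (Rabs_pos Y). pose proof (Rabs_pos Z).
  assert (Rabs e1 * Y ^ 2 <= B * Y ^ 2) by (apply Rmult_le_compat_r; nra).
  assert (Rabs e3 * Z ^ 2 <= B * Z ^ 2) by (apply Rmult_le_compat_r; nra).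
  assert (Rabs e2 * Rabs Y * Rabs Z <= B * (Rabs Y * Rabs Z)).
  { rewrite Rmult_assoc. apply Rmult_le_compat_r; nra. }
  nra.
Qed.

Lemma bnd_plus a b A B : Rabs a <= A -> Rabs b <= B -> Rabs (a + b) <= A + B.
Proof. intros. eapply Rle_trans. apply Rabs_triang. lra. Qed.
Lemma bnd_minus a b A B : Rabs a <= A -> Rabs b <= B -> Rabs (a - b) <= A + B.
Proof. intros. eapply Rle_trans. apply Rabs_triang. rewrite Rabs_Ropp. lra. Qed.
Lemma bnd_mult a b A B : Rabs a <= A -> Rabs b <= B -> Rabs (a * b) <= A * B.
Proof. intros. rewrite Rabs_mult. apply Rmult_le_compat; auto; apply Rabs_pos. Qed.
Lemma bnd_pow2 a A : Rabs a <= A -> Rabs (a ^ 2) <= A * A.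
Proof. intros. replace (a ^ 2) with (a * a) by ring. apply bnd_mult; auto. Qed.
Lemma bnd_opp a A : Rabs a <= A -> Rabs (- a) <= A.
Proof. intros. rewrite Rabs_Ropp; auto. Qed.
Lemma bnd_div a c A : Rabs a <= A -> Rabs (a / c) <= A * Rabs (/ c).
Proof. intros. unfold Rdiv. apply bnd_mult; auto. apply Rle_refl. Qed.

Ltac bnd := first
  [ apply bnd_plus; bnd | apply bnd_minus; bnd | apply bnd_mult; bnd
  | apply bnd_pow2; bnd | apply bnd_opp; bnd | apply bnd_div; bnd
  | solve [eauto] | apply Rle_refl ].


Lemma Dopp (f : R -> R) t a : is_derive f t a -> is_derive (fun x => - f x) t (- a).
Proof. intros. apply (is_derive_opp f); auto. Qed.

Ltac dch := lazymatch goal with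
  | |- is_derive (fun x => _ + _) _ _ => apply Dplus; dch
  | |- is_derive (fun x => _ - _) _ _ => apply Dminus; dch
  | |- is_derive (fun x => _ * _) _ _ => apply Dmult; dch
  | |- is_derive (fun x => _ ^ 2) _ _ => apply Dpow2; dch
  | |- is_derive (fun x => _ / _) _ _ => apply Ddiv; dch
  | |- is_derive (fun x => - _) _ _ => apply Dopp; dch
  | |- is_derive (fun x => ?c) _ _ => apply Dconst
  | _ => eassumption
  end.

Lemma abs_le_inv x b : Rabs x <= b -> - b <= x <= b.
Proof. intros. pose proof (Rle_abs x). pose proof (Rle_abs (-x)). rewrite Rabs_Ropp in H1. lra. Qed.

Lemma Vq_bounds kap alpha mu lam K0 B pt qt rt Y Z :
  0 < alpha -> lam <= kap -> lam <= 1/2 -> K0 = kap + alpha ^ 2 / 2 + alpha / 2 + 1 ->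
  0 < mu -> 2 * B * mu <= lam / 2 ->
  Rabs pt <= B -> Rabs qt <= B -> Rabs rt <= B ->
  lam / 2 * (Y ^ 2 + Z ^ 2) <=
  (kap + alpha ^ 2 / 2 + mu * pt) * Y ^ 2 + (alpha + mu * qt) * Y * Z + (1 + mu * rt) * Z ^ 2
  <= (K0 + lam / 2) * (Y ^ 2 + Z ^ 2).
Proof.
  intros Ha Hl1 Hl2 HK Hmu HB Hp Hq Hr.
  pose proof (qf_bound pt qt rt B Y Z Hp Hq Hr) as Hq0.
  apply abs_le_inv in Hq0.
  assert (HS : 0 <= Y ^ 2 + Z ^ 2) by nra.
  assert (Hmb : mu * (2 * B * (Y ^ 2 + Z ^ 2)) <= lam / 2 * (Y ^ 2 + Z ^ 2)) by nra.
  replace ((kap + alpha ^ 2 / 2 + mu * pt) * Y ^ 2 + (alpha + mu * qt) * Y * Z + (1 + mu * rt) * Z ^ 2)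
    with ((kap + alpha ^ 2 / 2) * Y ^ 2 + alpha * Y * Z + Z ^ 2 + mu * (pt * Y ^ 2 + qt * Y * Z + rt * Z ^ 2)) by ring.
  assert (Hlo : kap * Y ^ 2 + Z ^ 2 / 2 <= (kap + alpha ^ 2 / 2) * Y ^ 2 + alpha * Y * Z + Z ^ 2).
  { pose proof (pow2_ge_0 (alpha * Y + Z)). nra. }
  assert (Hhi : (kap + alpha ^ 2 / 2) * Y ^ 2 + alpha * Y * Z + Z ^ 2 <= K0 * (Y ^ 2 + Z ^ 2)).
  { pose proof (pow2_ge_0 (Y - Z)). subst K0. nra. }
  assert (lam * (Y ^ 2 + Z ^ 2) <= kap * Y ^ 2 + Z ^ 2 / 2) by nra.
  split; nra.
Qed.

Lemma norm_rel (mu B Fv y v : R) : 0 < mu -> Rabs Fv <= B ->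
  y ^ 2 + (v / mu + Fv * y) ^ 2 <= (1 + 2 * B ^ 2 + 2 / mu ^ 2) * (y ^ 2 + v ^ 2) /\
  y ^ 2 + v ^ 2 <= (1 + 2 * mu ^ 2 * (1 + B ^ 2)) * (y ^ 2 + (v / mu + Fv * y) ^ 2).
Proof.
  intros Hmu HF.
  assert (HF2 : Fv ^ 2 <= B ^ 2).
  { apply abs_le_inv in HF. nra. }
  set (Z := v / mu + Fv * y).
  assert (Hv : v = mu * (Z - Fv * y)) by (unfold Z; field; lra).
  split.
  - assert (Z ^ 2 <= 2 * (v / mu) ^ 2 + 2 * (Fv * y) ^ 2).
    { unfold Z. pose proof (pow2_ge_0 (v / mu - Fv * y)). nra. }
    assert ((v / mu) ^ 2 = v ^ 2 / mu ^ 2) by (field; lra).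
    assert (Fv ^ 2 * y ^ 2 <= B ^ 2 * y ^ 2) by (apply Rmult_le_compat_r; nra).
    assert (v ^ 2 / mu ^ 2 <= (1 / mu ^ 2) * (y ^ 2 + v ^ 2)).
    { unfold Rdiv. rewrite Rmult_1_l. assert (0 < / mu ^ 2) by (apply Rinv_0_lt_compat; nra).
      pose proof (pow2_ge_0 y). nra. }
    assert (0 <= 1 / mu ^ 2) by (apply Rlt_le, Rdiv_lt_0_compat; nra).
    assert (0 <= B ^ 2 * v ^ 2) by nra.
    unfold Rdiv in *. nra.
  - rewrite Hv.
    assert ((Z - Fv * y) ^ 2 <= 2 * Z ^ 2 + 2 * B ^ 2 * y ^ 2).
    { pose proof (pow2_ge_0 (Z + Fv * y)). assert (Fv ^ 2 * y ^ 2 <= B ^ 2 * y ^ 2) by (apply Rmult_le_compat_r; nra). nra. }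
    assert (0 <= mu ^ 2) by nra.
    assert (mu ^ 2 * (Z - Fv * y) ^ 2 <= mu ^ 2 * (2 * Z ^ 2 + 2 * B ^ 2 * y ^ 2)) by (apply Rmult_le_compat_l; auto).
    assert (0 <= mu ^ 2 * B ^ 2 * Z ^ 2) by (pose proof (pow2_ge_0 B); pose proof (pow2_ge_0 Z); nra).
    assert (0 <= mu ^ 2 * y ^ 2) by nra.
    replace ((mu * (Z - Fv * y)) ^ 2) with (mu ^ 2 * (Z - Fv * y) ^ 2) by ring.
    nra.
Qed.


Lemma core (alpha beta s : R) (phi F G1 G2 : R -> R) (M : R) :
  0 < alpha -> 0 < beta + s ->
  (forall t, is_derive F t (phi t)) -> (forall t, is_derive G1 t (F t)) ->
  (forall t, is_derive G2 t (F t ^ 2 - s)) ->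
  (forall t, Rabs (F t) <= M) -> (forall t, Rabs (G1 t) <= M) -> (forall t, Rabs (G2 t) <= M) ->
  exists mu0, 0 < mu0 /\ forall mu, 0 < mu <= mu0 ->
      asympt_stable (alpha * mu) (fun t => beta * mu ^ 2 + mu * phi t).
Proof.
  intros Ha Hk HF HG1 HG2 HFb HG1b HG2b.
  set (kap := beta + s) in *.
  set (p := fun t => 2 * kap * G1 t + alpha * G2 t).
  set (q := fun t => 2 * G2 t - 2 * alpha * G1 t).
  set (r := fun t => - (2 * G1 t)).
  set (E1 := fun t => - (2 * p t * F t) + q t * (alpha * F t - beta - F t ^ 2)).
  set (E2 := fun t => 2 * p t - q t * F t + q t * (F t - alpha) + 2 * r t * (alpha * F t - beta - F t ^ 2)).
  set (E3 := fun t => q t + 2 * r t * (F t - alpha)).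
  assert (Bp : exists B, forall t, Rabs (p t) <= B) by (eexists; intros t; unfold p; bnd).
  assert (Bq : exists B, forall t, Rabs (q t) <= B) by (eexists; intros t; unfold q; bnd).
  assert (Br : exists B, forall t, Rabs (r t) <= B) by (eexists; intros t; unfold r; bnd).
  assert (B1 : exists B, forall t, Rabs (E1 t) <= B) by (eexists; intros t; unfold E1, p, q; bnd).
  assert (B2 : exists B, forall t, Rabs (E2 t) <= B) by (eexists; intros t; unfold E2, p, q, r; bnd).
  assert (B3 : exists B, forall t, Rabs (E3 t) <= B) by (eexists; intros t; unfold E3, q, r; bnd).
  destruct Bp as [bp Hbp]; destruct Bq as [bq Hbq]; destruct Br as [br Hbr].
  destruct B1 as [b1 Hb1]; destruct B2 as [b2 Hb2]; destruct B3 as [b3 Hb3].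
  pose proof (Rabs_pos (p 0)); pose proof (Hbp 0).
  pose proof (Rabs_pos (q 0)); pose proof (Hbq 0).
  pose proof (Rabs_pos (r 0)); pose proof (Hbr 0).
  pose proof (Rabs_pos (E1 0)); pose proof (Hb1 0).
  pose proof (Rabs_pos (E2 0)); pose proof (Hb2 0).
  pose proof (Rabs_pos (E3 0)); pose proof (Hb3 0).
  pose proof (Rabs_pos (F 0)); pose proof (HFb 0).
  set (B := 1 + bp + bq + br + b1 + b2 + b3 + M).
  assert (HB1 : 1 <= B) by (unfold B; lra).
  assert (HBp : forall t, Rabs (p t) <= B) by (intros t; pose proof (Hbp t); unfold B; lra).
  assert (HBq : forall t, Rabs (q t) <= B) by (intros t; pose proof (Hbq t); unfold B; lra).
  assert (HBr : forall t, Rabs (r t) <= B) by (intros t; pose proof (Hbr t); unfold B; lra).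
  assert (HB1' : forall t, Rabs (E1 t) <= B) by (intros t; pose proof (Hb1 t); unfold B; lra).
  assert (HB2' : forall t, Rabs (E2 t) <= B) by (intros t; pose proof (Hb2 t); unfold B; lra).
  assert (HB3' : forall t, Rabs (E3 t) <= B) by (intros t; pose proof (Hb3 t); unfold B; lra).
  assert (HBF : forall t, Rabs (F t) <= B) by (intros t; pose proof (HFb t); unfold B; lra).
  clearbody B.
  set (lam := Rmin kap (1/2)).
  set (om := alpha * Rmin kap 1).
  set (K0 := kap + alpha ^ 2 / 2 + alpha / 2 + 1).
  assert (Hlam : 0 < lam) by (unfold lam; apply Rmin_glb_lt; lra).
  assert (Hlam1 : lam <= kap) by apply Rmin_l.
  assert (Hlam2 : lam <= 1/2) by apply Rmin_r.
  assert (Hom : 0 < om) by (unfold om; apply Rmult_lt_0_compat; auto; apply Rmin_glb_lt; lra).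
  assert (Hom1 : om <= alpha * kap) by (unfold om; apply Rmult_le_compat_l; [lra|apply Rmin_l]).
  assert (Hom2 : om <= alpha) by (unfold om; rewrite <- (Rmult_1_r alpha) at 2; apply Rmult_le_compat_l; [lra|apply Rmin_r]).
  assert (HK0 : 0 < K0) by (unfold K0; nra).
  exists (Rmin (lam / (4 * B)) (om / (4 * B))). split.
  { apply Rmin_glb_lt; apply Rdiv_lt_0_compat; lra. }
  intros mu [Hmu Hmu0].
  assert (Hm1 : 2 * B * mu <= lam / 2).
  { assert (H23 : mu <= lam / (4 * B)) by (eapply Rle_trans; [apply Hmu0|apply Rmin_l]).
    apply Rmult_le_compat_l with (r := 4 * B) in H23; [|lra].
    replace (4 * B * (lam / (4 * B))) with lam in H23 by (field; lra). lra. }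
  assert (Hm2 : 2 * B * mu <= om / 2).
  { assert (H23 : mu <= om / (4 * B)) by (eapply Rle_trans; [apply Hmu0|apply Rmin_r]).
    apply Rmult_le_compat_l with (r := 4 * B) in H23; [|lra].
    replace (4 * B * (om / (4 * B))) with om in H23 by (field; lra). lra. }
  clear Hmu0.
  set (Vf := fun t y v =>
    (kap + alpha ^ 2 / 2 + mu * p t) * y ^ 2 + (alpha + mu * q t) * y * (v / mu + F t * y)
    + (1 + mu * r t) * (v / mu + F t * y) ^ 2).
  assert (HVb : forall t y v, lam / 2 * (y ^ 2 + (v / mu + F t * y) ^ 2) <= Vf t y v
      <= (K0 + lam / 2) * (y ^ 2 + (v / mu + F t * y) ^ 2)).
  { intros t y v. unfold Vf. apply Vq_bounds with (B := B); auto. }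
  set (c1 := 1 + 2 * mu ^ 2 * (1 + B ^ 2)).
  set (c2 := 1 + 2 * B ^ 2 + 2 / mu ^ 2).
  assert (Hc1 : 0 < c1) by (unfold c1; nra).
  assert (Hc2 : 0 < c2) by (unfold c2; assert (0 < 2 / mu ^ 2) by (apply Rdiv_lt_0_compat; nra); nra).
  apply lyap_gen with (Vf := Vf) (c := mu * om / (2 * (K0 + lam / 2)))
    (k1 := lam / 2 / c1) (k2 := (K0 + lam / 2) * c2).
  - apply Rdiv_lt_0_compat; nra.
  - apply Rdiv_lt_0_compat; lra.
  - nra.
  - intros t Y W. destruct (norm_rel mu B (F t) Y W Hmu (HBF t)) as [N1 N2]. fold c1 c2 in N1, N2.
    destruct (HVb t Y W) as [V1 V2]. split.
    + apply Rle_trans with (lam / 2 * (Y ^ 2 + (W / mu + F t * Y) ^ 2)); auto.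
      replace (lam / 2 / c1 * (Y ^ 2 + W ^ 2)) with (lam / 2 * (/ c1 * (Y ^ 2 + W ^ 2))) by (field; lra).
      apply Rmult_le_compat_l; [lra|]. apply Rmult_le_reg_l with c1; auto.
      rewrite <- Rmult_assoc, Rinv_r, Rmult_1_l by lra. exact N2.
    + eapply Rle_trans. apply V2. rewrite Rmult_assoc. apply Rmult_le_compat_l; lra.
  - intros y v Hs t.
    pose proof (proj1 (Hs t)) as Hy. pose proof (proj2 (Hs t)) as Hv.
    pose proof (HF t) as HFt. pose proof (HG1 t) as HG1t. pose proof (HG2 t) as HG2t.
    eexists. split.
    { unfold Vf. unfold p, q, r. dch. }
    set (Z := v t / mu + F t * y t).
    match goal with |- ?d <= _ => assert (Hid : d = - mu * alpha * (kap * y t ^ 2 + Z ^ 2)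
        + mu ^ 2 * (E1 t * y t ^ 2 + E2 t * y t * Z + E3 t * Z ^ 2)) end.
    { unfold Z, E1, E2, E3, p, q, r, kap. cbv beta. field; lra. }
    eapply Rle_trans; [apply Req_le; exact Hid|]. clear Hid.
    pose proof (qf_bound _ _ _ B (y t) Z (HB1' t) (HB2' t) (HB3' t)) as HE.
    apply abs_le_inv in HE.
    destruct (HVb t (y t) (v t)) as [_ V2]. fold Z in V2.
    assert (HS : 0 <= y t ^ 2 + Z ^ 2) by nra.
    assert (J1 : om * (y t ^ 2 + Z ^ 2) <= alpha * (kap * y t ^ 2 + Z ^ 2)) by nra.
    assert (J2 : mu ^ 2 * (E1 t * y t ^ 2 + E2 t * y t * Z + E3 t * Z ^ 2)
       <= mu * (om / 2) * (y t ^ 2 + Z ^ 2)).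
    { apply Rle_trans with (mu ^ 2 * (2 * B * (y t ^ 2 + Z ^ 2))).
      apply Rmult_le_compat_l; nra.
      replace (mu ^ 2 * (2 * B * (y t ^ 2 + Z ^ 2))) with (mu * ((2 * B * mu) * (y t ^ 2 + Z ^ 2))) by ring.
      replace (mu * (om / 2) * (y t ^ 2 + Z ^ 2)) with (mu * ((om / 2) * (y t ^ 2 + Z ^ 2))) by ring.
      apply Rmult_le_compat_l; [lra|]. apply Rmult_le_compat_r; lra. }
    assert (J3 : mu * om / (2 * (K0 + lam / 2)) * Vf t (y t) (v t) <= mu * (om / 2) * (y t ^ 2 + Z ^ 2)).
    { replace (mu * om / (2 * (K0 + lam / 2))) with (mu * (om / 2) / (K0 + lam / 2)) by (field; lra).
      unfold Rdiv at 1. rewrite Rmult_assoc. apply Rmult_le_compat_l. nra.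
      apply Rmult_le_reg_l with (K0 + lam / 2). lra.
      rewrite <- Rmult_assoc, Rinv_r, Rmult_1_l by lra. lra. }
    assert (J4 : mu * (om * (y t ^ 2 + Z ^ 2)) <= mu * (alpha * (kap * y t ^ 2 + Z ^ 2))) by (apply Rmult_le_compat_l; lra).
    lra.
Qed.


Lemma Did t : is_derive (fun x : R => x) t 1.
Proof. exact (@is_derive_id R_AbsRing t). Qed.

Ltac req := match goal with |- ?a = ?b => change (@eq R a b) end.

Lemma exR (f : R -> R) a b : (forall x, continuous f x) -> ex_RInt f a b.
Proof. intros H. apply (@ex_RInt_continuous R_CompleteNormedModule). intros; apply H. Qed.
Lemma RIp (f g : R -> R) a b : ex_RInt f a b -> ex_RInt g a b ->
  RInt (fun x => f x + g x) a b = RInt f a b + RInt g a b.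
Proof. intros. exact (RInt_plus f g a b H H0). Qed.
Lemma RIm (f g : R -> R) a b : ex_RInt f a b -> ex_RInt g a b ->
  RInt (fun x => f x - g x) a b = RInt f a b - RInt g a b.
Proof. intros. exact (RInt_minus f g a b H H0). Qed.
Lemma RIs (f : R -> R) a b k : ex_RInt f a b ->
  RInt (fun x => k * f x) a b = k * RInt f a b.
Proof. intros. exact (RInt_scal f a b k H). Qed.
Lemma RIc a b c : RInt (fun _ => c) a b = (b - a) * c.
Proof. exact (@RInt_const R_CompleteNormedModule a b c). Qed.

Theorem mainTheorem1 (T alpha betah : R) (phi : R -> R) :
  0 < T -> 0 < alpha -> betah < 0 ->
  (forall t, continuous phi t) ->
  (forall t, phi (t + T) = phi t) ->
  RInt phi 0 T = 0 ->
  / T * RInt (fun tau => (RInt phi 0 tau) ^ 2) 0 T >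
    (/ T * RInt (fun tau => tau * phi tau) 0 T) ^ 2 - betah ->
  exists mu0, 0 < mu0 /\
    forall mu, 0 < mu <= mu0 ->
      asympt_stable (alpha * mu) (fun t => betah * mu ^ 2 + mu * phi t).
Proof.
  intros HT Ha Hb Hc Hp H0 Hmain.
  set (Phi := fun t => RInt phi 0 t).
  assert (HPd : forall t, is_derive Phi t (phi t)) by (intros; apply prim_der; auto).
  assert (HPc : forall t, continuous Phi t) by (intros t; eapply cont_of_der; apply HPd).
  assert (HPp : forall t, Phi (t + T) = Phi t) by (intros; unfold Phi; apply prim_periodic; auto).
  set (m := / T * RInt Phi 0 T).
  set (F := fun t => Phi t - m).
  assert (HFd : forall t, is_derive F t (phi t)).
  { intros t. replace (phi t) with (phi t - 0) by ring. unfold F. apply Dminus. apply HPd. apply Dconst. }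
  assert (HFc : forall t, continuous F t) by (intros t; eapply cont_of_der; apply HFd).
  assert (HFp : forall t, F (t + T) = F t) by (intros; unfold F; rewrite HPp; auto).
  assert (HF0 : RInt F 0 T = 0).
  { unfold F. rewrite RIm, RIc. unfold m. req. field. lra. apply exR; auto. apply exR. intros; apply continuous_const. }
  set (G1 := fun t => RInt F 0 t).
  assert (HG1d : forall t, is_derive G1 t (F t)) by (intros; apply prim_der; auto).
  assert (HG1p : forall t, G1 (t + T) = G1 t) by (intros; unfold G1; apply prim_periodic; auto).
  assert (HG1c : forall t, continuous G1 t) by (intros t; eapply cont_of_der; apply HG1d).
  set (s := / T * RInt (fun x => F x ^ 2) 0 T).
  set (D := fun x => F x ^ 2 - s).
  assert (HDd : forall t, is_derive D t (2 * F t * phi t - 0)).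
  { intros t. unfold D. apply Dminus. apply Dpow2. apply HFd. apply Dconst. }
  assert (HDc : forall t, continuous D t) by (intros t; eapply cont_of_der; apply HDd).
  assert (HF2c : forall t, continuous (fun x => F x ^ 2) t).
  { intros t; eapply cont_of_der. apply Dpow2. apply HFd. }
  assert (HDp : forall t, D (t + T) = D t) by (intros; unfold D; rewrite HFp; auto).
  assert (HD0 : RInt D 0 T = 0).
  { unfold D. rewrite RIm, RIc. unfold s. req. field. lra. apply exR; auto. apply exR. intros; apply continuous_const. }
  set (G2 := fun t => RInt D 0 t).
  assert (HG2d : forall t, is_derive G2 t (F t ^ 2 - s)) by (intros; apply (prim_der D); auto).
  assert (HG2p : forall t, G2 (t + T) = G2 t) by (intros; unfold G2; apply prim_periodic; auto).
  assert (HG2c : forall t, continuous G2 t) by (intros t; eapply cont_of_der; apply HG2d).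
  destruct (periodic_bounded F T HT HFc HFp) as [M1 [_ HM1]].
  destruct (periodic_bounded G1 T HT HG1c HG1p) as [M2 [_ HM2]].
  destruct (periodic_bounded G2 T HT HG2c HG2p) as [M3 [_ HM3]].
  assert (Hibp : RInt Phi 0 T + RInt (fun tau => tau * phi tau) 0 T = 0).
  { assert (Hi : is_RInt (fun tau => Phi tau + tau * phi tau) 0 T
                  (minus (T * Phi T) (0 * Phi 0))).
    { apply (is_RInt_derive (fun tau => tau * Phi tau)).
      - intros x _. replace (Phi x + x * phi x) with (1 * Phi x + x * phi x) by ring.
        apply Dmult. apply Did. apply HPd.
      - intros x _. apply (@continuous_plus R_UniformSpace R_AbsRing R_NormedModule).
        apply HPc. apply (@continuous_mult R_UniformSpace R_AbsRing). apply continuous_id. apply Hc. }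
    apply (@is_RInt_unique R_CompleteNormedModule) in Hi. rewrite RIp in Hi.
    rewrite Hi. unfold minus, plus, opp; simpl. unfold Phi at 1. rewrite H0. ring.
    apply exR; auto. apply exR. intros x. apply (@continuous_mult R_UniformSpace R_AbsRing). apply continuous_id. apply Hc. }
  assert (Hs : s = / T * RInt (fun tau => Phi tau ^ 2) 0 T - m ^ 2).
  { unfold s, F.
    assert (Hex : forall x, (Phi x - m) ^ 2 = Phi x ^ 2 + (-2 * m) * Phi x + m ^ 2) by (intros; ring).
    rewrite (RInt_ext _ (fun x => Phi x ^ 2 + (-2 * m) * Phi x + m ^ 2)) by (intros; apply Hex).
    assert (HP2c : forall x, continuous (fun x => Phi x ^ 2) x).
    { intros t; eapply cont_of_der. apply Dpow2. apply HPd. }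
    rewrite RIp, RIp, RIs, RIc. unfold m. req. field. lra.
    apply exR; auto. apply exR; auto.
    apply exR. intros x. apply (@continuous_mult R_UniformSpace R_AbsRing). apply continuous_const. apply HPc.
    apply exR. intros x. apply (@continuous_plus R_UniformSpace R_AbsRing R_NormedModule).
    apply HP2c. apply (@continuous_mult R_UniformSpace R_AbsRing). apply continuous_const. apply HPc.
    apply exR. intros; apply continuous_const. }
  assert (Hm : m = - (/ T * RInt (fun tau => tau * phi tau) 0 T)).
  { unfold m. replace (RInt Phi 0 T) with (- RInt (fun tau => tau * phi tau) 0 T) by lra. ring. }
  assert (Hk : 0 < betah + s).
  { rewrite Hs. unfold Phi in Hs |- *. rewrite Hm. 
    replace ((- (/ T * RInt (fun tau => tau * phi tau) 0 T)) ^ 2)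
       with ((/ T * RInt (fun tau => tau * phi tau) 0 T) ^ 2) by ring.
    unfold Phi. lra. }
  apply (core alpha betah s phi F G1 G2 (M1 + M2 + M3)); auto.
  - intros t; pose proof (HM1 t); pose proof (HM2 t); pose proof (HM3 t);
    pose proof (Rabs_pos (G1 t)); pose proof (Rabs_pos (G2 t)); lra.
  - intros t; pose proof (HM1 t); pose proof (HM2 t); pose proof (HM3 t);
    pose proof (Rabs_pos (F t)); pose proof (Rabs_pos (G2 t)); lra.
  - intros t; pose proof (HM1 t); pose proof (HM2 t); pose proof (HM3 t);
    pose proof (Rabs_pos (G1 t)); pose proof (Rabs_pos (F t)); lra.
Qed.
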